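(* Let $q=2^n$, $a,b\in\mathbb{F}_{q^2}^{*}$, and $\xi(a,b)=\sum_{\lambda\in U}(-1)^{\mathrm{Tr}_1^{2n}\left(\frac{a}{\lambda+b}\right)}$. Then $$\xi(a,b)=\begin{cases}1+(-1)^{\mathrm{Tr}_1^n(a\overline{a})}q, & \text{if } b\in U \text{ and } \mathrm{Tr}_n^{2n}(a\overline{b})=0,\\ 1, & \text{if } b\in U \text{ and } \mathrm{Tr}_n^{2n}(a\overline{b})\neq0,\\ \left(1-\mathcal{K}_n\!\left(\frac{a\overline{a}}{1+b^2\overline{b}^2}\right)\right)(-1)^{\mathrm{Tr}_1^{2n}\left(\frac{\overline{a}b}{1+b\overline{b}}\right)}, & \text{if } b\in\mathbb{F}_{q^2}^{*}\setminus U.\end{cases}$$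
   Context: For $k\mid m$, $\mathrm{Tr}_k^{m}(x)=x+x^{2^k}+\cdots+x^{2^{(m/k-1)k}}$ is the trace from $\mathbb{F}_{2^m}$ to $\mathbb{F}_{2^k}$. For $x\in\mathbb{F}_{q^2}$ write $\overline{x}=x^{q}$; $U=\{\eta\in\mathbb{F}_{q^2}:\eta^{q+1}=1\}$. Division by zero uses the convention $\frac10=0$ (so the term $\lambda=b$, if $b\in U$, contributes $1$). The binary Kloosterman sum is $\mathcal{K}_n(a)=\sum_{x\in\mathbb{F}_{2^n}}(-1)^{\mathrm{Tr}_1^n(\frac1x+ax)}$. *)

(* Defs.v *)
From mathcomp Require Import all_boot all_order all_algebra all_field.
Set Implicit Arguments. Unset Strict Implicit. Unset Printing Implicit Defensive.
Import GRing.Theory.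
Local Open Scope ring_scope.

Section Defs.
Context {F : finFieldType}.

Definition tr (k m : nat) (x : F) : F :=
  \sum_(i < m %/ k) x ^+ (2 ^ (i * k)).

(* (-1)^t for t in F_2 (embedded in F): 1 if t = 0, -1 otherwise *)
Definition sgnF (t : F) : int := if t == 0 then 1 else -1.

Definition conjq (n : nat) (x : F) : F := x ^+ (2 ^ n).

Definition Ucirc (n : nat) : {set F} := [set eta : F | eta ^+ (2 ^ n + 1) == 1].

(* binary Kloosterman sum over the subfield F_{2^n} = { x : x^(2^n) = x }.
   x^-1 is 0 at 0 (mathcomp convention). *)
Definition kloost (n : nat) (a : F) : int :=
  \sum_(x : F | x ^+ (2 ^ n) == x) sgnF (tr 1 n (x^-1 + a * x)).

Definition xi (n : nat) (a b : F) : int :=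
  \sum_(l in Ucirc n) sgnF (tr 1 (2 * n) (a / (l + b))).

End Defs.

(* Main.v *)
Require Import Defs.
From mathcomp Require Import all_boot all_order all_algebra all_field.
From mathcomp Require Import zify ring.
Import GRing.Theory.
Local Open Scope ring_scope.

Section S.
Variable F : finFieldType.
Variable n : nat.
Hypothesis hF : #|F| = (2 ^ (2 * n))%N.

Local Notation q := (2 ^ n)%N.

Lemma n_gt0 : (0 < n)%N.
Proof.
case: n hF => // H; have := card_finNzRing_gt1 F; rewrite H muln0 expn0 //.
Qed.

Lemma char2 : (2%:R : F) = 0.
Proof.
have := expf_card (-1 : F); rewrite hF.
have -> : (2 ^ (2 * n) = 2 * 2 ^ (2 * n).-1)%N.
  by rewrite -expnS prednK // muln_gt0 n_gt0.
rewrite exprM sqrrN expr1n => /eqP; rewrite -subr_eq0 opprK => /eqP.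
by move=> H; rewrite expr1n in H; rewrite -H.
Qed.

Lemma addxx (x : F) : x + x = 0.
Proof. by rewrite -mulr2n -mulr_natr char2 mulr0. Qed.

Lemma oppE (x : F) : - x = x.
Proof. by apply/eqP; rewrite eq_sym -subr_eq0 opprK addxx. Qed.

Lemma frob k (x y : F) : (x + y) ^+ (2 ^ k) = x ^+ (2 ^ k) + y ^+ (2 ^ k).
Proof.
elim: k => [|k IH]; first by rewrite !expr1.
by rewrite expnSr !exprM IH sqrrD -mulr_natr char2 mulr0 addr0.
Qed.

Lemma frob0 k : (0 : F) ^+ (2 ^ k) = 0.
Proof. by rewrite expr0n expn_eq0. Qed.

Lemma frob_sum k (I : finType) (P : pred I) (G : I -> F) :
  (\sum_(i | P i) G i) ^+ (2 ^ k) = \sum_(i | P i) G i ^+ (2 ^ k).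
Proof.
by apply: (big_morph (fun x => x ^+ (2 ^ k))); [exact: frob | exact: frob0].
Qed.

Lemma expqq (x : F) : x ^+ q ^+ q = x.
Proof. by rewrite -exprM -expnD addnn -mul2n -hF expf_card. Qed.


Definition T m (x : F) := \sum_(i < m) x ^+ (2 ^ i).

Lemma trE m x : tr 1 m x = T m x.
Proof. by rewrite /tr /T divn1; apply: eq_bigr => i _; rewrite muln1. Qed.

Lemma T_add m x y : T m (x + y) = T m x + T m y.
Proof. by rewrite /T -big_split; apply: eq_bigr => i _; rewrite frob. Qed.

Lemma T0 m : T m 0 = 0.
Proof. by rewrite /T big1 // => i _; rewrite frob0. Qed.

Lemma T_sq m x : (T m x) ^+ 2 = T m (x ^+ 2).
Proof.
rewrite /T (frob_sum 1); apply: eq_bigr => i _.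
by rewrite expn1 -!exprM mulnC.
Qed.

Lemma T_sq2 m x : T m (x ^+ 2) = T m x + x + x ^+ (2 ^ m).
Proof.
have H : T m.+1 x = x + T m (x ^+ 2).
  rewrite /T big_ord_recl expn0 expr1; congr (_ + _).
  by apply: eq_bigr => i _; rewrite -exprM lift0 expnS.
have H2 : T m.+1 x = T m x + x ^+ (2 ^ m) by rewrite /T big_ord_recr.
have : x + T m (x ^+ 2) = T m x + x ^+ (2 ^ m) by rewrite -H -H2.
move=> E; rewrite -[T m (x ^+ 2)](addKr x) E.
by rewrite oppE addrA (addrC x).
Qed.

Lemma T2_idem x : (T (2 * n) x) ^+ 2 = T (2 * n) x.
Proof. by rewrite T_sq T_sq2 -hF expf_card -addrA addxx addr0. Qed.

Lemma Tn_idem x : x ^+ q = x -> (T n x) ^+ 2 = T n x.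
Proof. by move=> hx; rewrite T_sq T_sq2 hx -addrA addxx addr0. Qed.

Lemma idem01 (t : F) : t ^+ 2 = t -> t = 0 \/ t = 1.
Proof.
move=> H; have /eqP : t * (t - 1) = 0 by rewrite mulrBr mulr1 -expr2 H subrr.
by rewrite mulf_eq0 subr_eq0; case/orP => /eqP ->; [left | right].
Qed.

Lemma sgnF_add (t s : F) : t ^+ 2 = t -> s ^+ 2 = s ->
  sgnF (t + s) = sgnF t * sgnF s.
Proof.
move=> /idem01 [] -> /idem01 [] ->; rewrite /sgnF ?addr0 ?add0r ?eqxx ?oner_eq0 //.
by rewrite addxx eqxx.
Qed.

Lemma sgnF_sq (t : F) : sgnF (t ^+ 2) = sgnF t.
Proof. by rewrite /sgnF expf_eq0. Qed.

Lemma T2split x : T (2 * n) x = T n (x + x ^+ q).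
Proof.
rewrite T_add /T mul2n -addnn big_split_ord /=; congr (_ + _).
by apply: eq_bigr => i _; rewrite -exprM -expnD.
Qed.

Lemma T2conj x : T (2 * n) (x ^+ q) = T (2 * n) x.
Proof. by rewrite !T2split expqq addrC. Qed.

Lemma trn (x : F) : tr n (2 * n) x = x + x ^+ q.
Proof.
rewrite /tr mulnK ?n_gt0 // big_ord_recl big_ord1 /= mul0n expn0 expr1.
by rewrite /bump /= mul1n.
Qed.


Lemma q_gt1 : (1 < q)%N.
Proof. by rewrite -{1}(expn0 2) ltn_exp2l // n_gt0. Qed.

Lemma cardF : #|F| = (q * q)%N.
Proof. by rewrite hF mulnC expnM expnS expn1. Qed.

Lemma card_roots (p : {poly F}) : p != 0 -> (#|[set x | root p x]| <= (size p).-1)%N.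
Proof.
move=> p0; rewrite cardE.
have H := max_poly_roots p0 _ (enum_uniq (mem [set x | root p x])).
have /H : all (root p) (enum (mem [set x | root p x])).
  by apply/allP => x; rewrite mem_enum inE.
by case: (size p) => // m; rewrite ltnS.
Qed.

Definition Fq : {set F} := [set x : F | x ^+ q == x].

Lemma card_Fq_le : (#|Fq| <= q)%N.
Proof.
have sz : size ('X^q - 'X : {poly F}) = q.+1.
  by rewrite size_addl size_polyXn // size_opp size_polyX ltnS q_gt1.
have p0 : ('X^q - 'X : {poly F}) != 0 by rewrite -size_poly_eq0 sz.
have := card_roots _ p0; rewrite sz /=; apply: leq_trans.
apply: subset_leq_card; apply/subsetP => x; rewrite !inE /root !hornerE subr_eq0 //.
Qed.

Lemma card_U_le : (#|Ucirc n : {set F}| <= q + 1)%N.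
Proof.
have sz : size ('X^(q + 1) - 1%:P : {poly F}) = (q + 1).+1 by rewrite size_XnsubC // addn1.
have p0 : ('X^(q + 1) - 1%:P : {poly F}) != 0 by rewrite -size_poly_eq0 sz.
have := card_roots _ p0; rewrite sz /=; apply: leq_trans.
apply: subset_leq_card; apply/subsetP => x; rewrite !inE /root !hornerE subr_eq0 //.
Qed.

Lemma card_fiber (S Ts : {set F}) (f : F -> F) k :
  {in S, forall x, f x \in Ts} ->
  (forall t, t \in Ts -> #|[set x in S | f x == t]| <= k)%N ->
  (#|S| <= #|Ts| * k)%N.
Proof.
move=> fST hk; rewrite -sum1_card (partition_big f (mem Ts)) //=.
rewrite -sum_nat_const; apply: leq_sum => t tT.
apply: leq_trans (hk t tT); rewrite -sum1_card; apply: eq_leq.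
by apply: eq_bigl => x; rewrite !inE.
Qed.


Lemma Fq0 : (0 : F) \in Fq.
Proof. by rewrite inE frob0. Qed.

Lemma normq (x : F) : x ^+ (q + 1) = x * x ^+ q.
Proof. by rewrite exprD expr1 mulrC. Qed.

Lemma norm_Fq (x : F) : x ^+ (q + 1) \in Fq.
Proof. by rewrite inE normq exprMn expqq mulrC. Qed.

Lemma card_Fq_U : #|Fq| = q /\ #|Ucirc n : {set F}| = (q + 1)%N.
Proof.
pose N (x : F) := x ^+ (q + 1).
have NS : {in [set~ (0%R : F)], forall x, N x \in Fq :\ 0}.
  by move=> x; rewrite !inE /N => x0; rewrite expf_neq0 //=; have := norm_Fq x; rewrite inE.
have cS : #|[set~ (0%R : F)]| = (q * q).-1 by rewrite cardsC1 cardF.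
have cT : #|Fq :\ 0| = #|Fq|.-1 by rewrite (cardsD1 (0 : F) Fq) Fq0.
have H1 : (#|[set~ (0%R : F)]| <= #|Fq :\ 0%R| * (q + 1))%N.
  apply: (card_fiber _ _ _ _ NS) => t; rewrite !inE => /andP [t0 _].
  have sz : size ('X^(q + 1) - t%:P : {poly F}) = (q + 1).+1 by rewrite size_XnsubC // addn1.
  have p0 : ('X^(q + 1) - t%:P : {poly F}) != 0 by rewrite -size_poly_eq0 sz.
  have := card_roots _ p0; rewrite sz /=; apply: leq_trans.
  apply: subset_leq_card; apply/subsetP => x; rewrite !inE /root !hornerE subr_eq0.
  by case/andP.
have H2 : (#|[set~ (0%R : F)]| <= #|Fq :\ 0%R| * #|Ucirc n : {set F}|)%N.
  apply: (card_fiber _ _ _ _ NS) => t; rewrite !inE => /andP [t0 _].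
  case: (set_0Vmem [set x in [set~ (0%R : F)] | N x == t]) => [-> | [x0]].
    by rewrite cards0.
  rewrite !inE => /andP [x00 /eqP Nx0].
  rewrite -(card_imset _ (divIf x00)); apply: subset_leq_card.
  apply/subsetP => y /imsetP [x]; rewrite !inE => /andP [_ /eqP Nx] ->.
  by rewrite expr_div_n; rewrite /N in Nx Nx0; rewrite Nx Nx0 divff.
have := card_Fq_le; have := card_U_le; have := q_gt1.
rewrite cS cT in H1 H2.
move: (#|Fq|) (#|Ucirc n : {set F}|) H1 H2 => f u H1 H2 h1 h2 h3.
split; nia.
Qed.


Lemma size_trpoly m : size (\sum_(i < m.+1) 'X^(2 ^ i) : {poly F}) = (2 ^ m).+1.
Proof.
elim: m => [|m IH]; first by rewrite big_ord1 expn0 size_polyXn.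
rewrite big_ord_recr /= addrC size_addl size_polyXn // IH ltnS expnS.
by rewrite -{1}(mul1n (2 ^ m)%N) ltn_pmul2r ?expn_gt0.
Qed.

Lemma Tn_nonzero : exists2 k, k \in Fq & T n k != 0.
Proof.
have [m nE] : exists m, n = m.+1 by case: n n_gt0 => // m _; exists m.
pose P : {poly F} := \sum_(i < n) 'X^(2 ^ i).
have sz : size P = (2 ^ m).+1 by rewrite /P nE size_trpoly.
have P0 : P != 0 by rewrite -size_poly_eq0 sz.
have PE : forall x, P.[x] = T n x.
  move=> x; rewrite /P /T; elim/big_rec2: _ => [|i y p _ <-]; first by rewrite horner0.
  by rewrite hornerD hornerXn.
apply/exists_inP; apply: contraT; rewrite negb_exists_in => /forall_inP H.
have := card_roots _ P0; rewrite sz /= => H2.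
have : (#|Fq| <= 2 ^ m)%N.
  apply: leq_trans H2; apply: subset_leq_card; apply/subsetP => x xF.
  by rewrite inE /root PE; have := H x xF; rewrite negbK.
case: card_Fq_U => -> _; rewrite nE expnS leqNgt.
by rewrite -{1}(mul1n (2 ^ m)%N) ltn_pmul2r ?expn_gt0.
Qed.

Lemma sum_sgn_Fq : \sum_(k in Fq) sgnF (T n k) = 0.
Proof.
have [k0 k0F Tk0] := Tn_nonzero.
have k0q : k0 ^+ q = k0 by move: k0F; rewrite inE => /eqP.
have T1 : T n k0 = 1.
  by case: (idem01 _ (Tn_idem _ k0q)) => // H; rewrite H eqxx in Tk0.
have E : \sum_(k in Fq) sgnF (T n k) = - \sum_(k in Fq) sgnF (T n k).
  rewrite {1}(reindex_inj (addrI k0)) /= -sumrN; apply: eq_big => k.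
    by rewrite !inE frob k0q (inj_eq (addrI k0)).
  rewrite inE frob k0q => /eqP /(addrI k0) kq.
  rewrite T_add sgnF_add ?T1 ?(Tn_idem _ kq) ?expr1n //.
  by rewrite /sgnF oner_eq0 mulN1r.
move: E; move: (\sum_(k in Fq) sgnF (T n k)) => s; lia.
Qed.


Lemma sq_inj (x y : F) : x * x = y * y -> x = y.
Proof.
move=> H; have : (x + y) ^+ (2 ^ 1) = 0 by rewrite frob expn1 !expr2 H addxx.
by move/eqP; rewrite expf_eq0 /= addr_eq0 oppE => /eqP.
Qed.

Lemma card_part (S Ts : {set F}) (f : F -> F) :
  {in S, forall x, f x \in Ts} ->
  #|S| = (\sum_(t in Ts) #|[set x in S | f x == t]|)%N.
Proof.
move=> fST; rewrite -sum1_card (partition_big f (mem Ts)) //=.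
by apply: eq_bigr => t _; rewrite -sum1_card; apply: eq_bigl => x; rewrite !inE.
Qed.

Lemma sum_part (S Ts : {set F}) (f : F -> F) (G : F -> int) :
  {in S, forall x, f x \in Ts} ->
  \sum_(x in S) G (f x) = \sum_(t in Ts) G t *+ #|[set x in S | f x == t]|.
Proof.
move=> fST; rewrite (partition_big f (mem Ts)) //=.
apply: eq_bigr => t _; rewrite -sumr_const; apply: eq_big => x; rewrite ?inE //.
by case/andP => _ /eqP ->.
Qed.

Lemma divr_eq1 (x y : F) : y != 0 -> (x / y == 1) = (x == y).
Proof.
move=> y0; apply/eqP/eqP => [H | ->]; last by rewrite divff.
by rewrite -(divfK y0 x) H mul1r.
Qed.

Lemma all2 (Ts : {set F}) (f : F -> nat) :
  (\sum_(t in Ts) f t = 2 * #|Ts|)%N -> (forall t, t \in Ts -> f t <= 2)%N ->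
  forall t, t \in Ts -> f t = 2%N.
Proof.
move=> Hs Hle.
have E : (\sum_(t in Ts) (2 - f t) + \sum_(t in Ts) f t = \sum_(t in Ts) 2)%N.
  rewrite -big_split; apply: eq_bigr => t tT; exact: (subnK (Hle t tT)).
move: E; rewrite Hs sum_nat_const => E.
have /eqP : (\sum_(t in Ts) (2 - f t) = 0)%N by lia.
rewrite sum_nat_eq0 => /forall_inP H t tT; have := H t tT; have := Hle t tT.
lia.
Qed.


Lemma core (d : F) : d != 0 ->
  \sum_(mu in Ucirc n) sgnF (tr 1 (2 * n) (d * mu)) = 1 - kloost n (d * d ^+ q).
Proof.
move=> d0.
set A := d * d ^+ q.
have AE : d ^+ (q + 1) = A by rewrite normq.
have A0 : A != 0 by rewrite -AE expf_neq0.
have AF : A ^+ q = A by have := norm_Fq d; rewrite AE inE => /eqP.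
pose V : {set F} := [set x | x ^+ (q + 1) == A].
pose Qs t := [set x in V | x + x ^+ q == t].
pose Ps t := [set y in Fq :\ 0 | y + A / y == t].
have QF : {in V, forall x, x + x ^+ q \in Fq}.
  by move=> x _; rewrite inE frob expqq addrC.
have PF : {in Fq :\ 0, forall y, y + A / y \in Fq}.
  move=> y; rewrite !inE => /andP [_ /eqP yq].
  by rewrite frob exprMn exprVn yq AF.
have L1 : \sum_(mu in Ucirc n) sgnF (tr 1 (2 * n) (d * mu))
          = \sum_(x in V) sgnF (T n (x + x ^+ q)).
  rewrite (reindex_inj (divIf d0)) /=; apply: eq_big => x.
    by rewrite !inE expr_div_n AE divr_eq1.
  by move=> _; rewrite mulrC divfK // trE T2split.
have L2 : kloost n A = 1 + \sum_(y in Fq :\ 0) sgnF (T n (y + A / y)).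
  rewrite /kloost (bigD1 0) /= ?frob0 // invr0 mulr0 addr0 trE T0 /sgnF eqxx.
  congr (_ + _); rewrite (reindex_inj invr_inj) /=; apply: eq_big => y.
    by rewrite !inE exprVn (inj_eq invr_inj) invr_eq0 andbC.
  by move=> _; rewrite invrK trE.
have sQ : \sum_(x in V) sgnF (T n (x + x ^+ q))
          = \sum_(t in Fq) sgnF (T n t) *+ #|Qs t|.
  exact: (sum_part _ _ _ (fun t => sgnF (T n t)) QF).
have sP : \sum_(y in Fq :\ 0) sgnF (T n (y + A / y))
          = \sum_(t in Fq) sgnF (T n t) *+ #|Ps t|.
  exact: (sum_part _ _ _ (fun t => sgnF (T n t)) PF).
have cV : #|V| = (q + 1)%N.
  have -> : V = [set d * mu | mu in Ucirc n].
    apply/setP => x; rewrite inE; apply/eqP/imsetP => [H | [mu]].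
      exists (x / d); last by rewrite mulrC divfK.
      by rewrite inE expr_div_n H AE divff.
    by rewrite inE => /eqP mU ->; rewrite exprMn mU mulr1 AE.
  by rewrite card_imset; [case: card_Fq_U | exact: mulfI d0].
have c2 : forall t, t \in Fq -> (#|Qs t| + #|Ps t| = 2)%N.
  apply: all2.
    rewrite big_split /= -(card_part _ _ _ QF) -(card_part _ _ _ PF).
    rewrite cV; have := cardsD1 (0 : F) Fq; rewrite Fq0 /=; case: card_Fq_U => -> _; move: (#|Fq :\ 0|) (2 ^ n)%N => X Q; lia.
  move=> t tF; have [-> | t0] := eqVneq t 0.
    have le1 : forall S : {set F}, {in S, forall x, x * x = A} -> (#|S| <= 1)%N.
      move=> S HS; case: (set_0Vmem S) => [-> | [x0 x0S]]; first by rewrite cards0.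
      rewrite -(cards1 x0); apply: subset_leq_card; apply/subsetP => x xS.
      by rewrite inE; apply/eqP; apply: sq_inj; rewrite !HS.
    rewrite -[2%N]/(1 + 1)%N; apply: leq_add; apply: le1 => x; rewrite !inE.
      case/andP => /eqP xA; rewrite addr_eq0 oppE => /eqP xq.
      by rewrite -xA normq -xq.
    case/andP => /andP [x0 _]; rewrite addr_eq0 oppE => /eqP xq.
    by rewrite {2}xq mulrC divfK.
  rewrite -cardsUI (_ : Qs t :&: Ps t = set0) ?cards0 ?addn0; last first.
    apply/setP => x; rewrite !inE; apply/negbTE.
    apply/negP => /andP [/andP [_ /eqP xt] /andP [/andP [_ xq] _]].
    by move: t0; rewrite -xt (eqP xq) addxx eqxx.
  pose p : {poly F} := 'X^2 + t%:P * 'X + A%:P.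
  have sz : size p = 3%N.
    rewrite /p -addrA size_addl size_polyXn //.
    apply: leq_ltn_trans (size_add _ _) _; rewrite gtn_max.
    by rewrite mul_polyC (leq_ltn_trans (size_scale_leq _ _)) ?size_polyX //
      (leq_ltn_trans (size_polyC_leq1 _)).
  have p0 : p != 0 by rewrite -size_poly_eq0 sz.
  have := card_roots _ p0; rewrite sz /=; apply: leq_trans.
  apply: subset_leq_card; apply/subsetP => x; rewrite !inE /root /p !hornerE.
  case/orP.
    case/andP => /eqP xA /eqP <-; rewrite -xA normq; apply/eqP.
    by rewrite expr2 mulrDl [x ^+ q * x]mulrC addrA addxx add0r addxx.
  case/andP => /andP [x0 _] /eqP <-; apply/eqP.
  by rewrite expr2 mulrDl divfK // addrA addxx add0r addxx.
have S0 : \sum_(t in Fq) sgnF (T n t) *+ #|Qs t| + \sum_(t in Fq) sgnF (T n t) *+ #|Ps t| = 0.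
  rewrite -big_split /=.
  rewrite (eq_bigr (fun t => sgnF (T n t) *+ 2)); last first.
    by move=> t tF; rewrite -mulrnDr c2.
  by rewrite sumrMnl sum_sgn_Fq.
rewrite L1 L2 sQ sP; move: S0.
move: (\sum_(t in Fq) _ *+ #|Qs t|) (\sum_(t in Fq) _ *+ #|Ps t|) => a b; lia.
Qed.


Lemma coreT (d : F) : d != 0 ->
  \sum_(mu in Ucirc n) sgnF (T (2 * n) (d * mu)) = 1 - kloost n (d * d ^+ q).
Proof. by move=> d0; rewrite -(core _ d0); apply: eq_bigr => mu _; rewrite trE. Qed.

Lemma inU (x : F) : (x \in Ucirc n) = (x * x ^+ q == 1).
Proof. by rewrite inE normq. Qed.

Lemma part3 (a b : F) : a != 0 -> b != 0 -> b \notin Ucirc n ->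
  xi n a b = (1 - kloost n (a * a ^+ q / (1 + b ^+ 2 * (b ^+ q) ^+ 2)))
             * sgnF (tr 1 (2 * n) (a ^+ q * b / (1 + b * b ^+ q))).
Proof.
move=> a0 b0 bU.
have bq0 : b ^+ q != 0 by rewrite expf_neq0.
set c := b * b ^+ q.
have cF : c ^+ q = c by rewrite /c exprMn expqq mulrC.
have c1 : 1 + c != 0.
  by apply: contra bU; rewrite addr_eq0 oppE eq_sym inU.
pose D x := b ^+ q * x + 1.
have DU : forall x, x \in Ucirc n -> D x != 0.
  move=> x; rewrite inU => /eqP xx; apply/negP => /eqP H.
  move: H; rewrite /D => /eqP; rewrite addr_eq0 oppE => /eqP H.
  have E : (b ^+ q * x) * (b ^+ q * x) ^+ q = c * (x * x ^+ q).
    by rewrite exprMn expqq /c; ring.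
  rewrite xx mulr1 H expr1n mulr1 in E.
  by move: bU; rewrite inU -/c -E eqxx.
pose g x := (x + b) / D x.
have gb : forall x, D x != 0 -> g x + b = x * (1 + c) / D x.
  move=> x Dx; have Dx' : b ^+ q * x + 1 != 0 := Dx.
  rewrite /g /D; have -> : (x + b) / (b ^+ q * x + 1) + b
      = ((x + b) + b * (b ^+ q * x + 1)) / (b ^+ q * x + 1) by field.
  congr (_ / _); have -> : x + b + b * (b ^+ q * x + 1) = x * (1 + b * b ^+ q) + (b + b)
    by ring.
  by rewrite addxx addr0.
have gD : forall x, D x != 0 -> D (g x) = (1 + c) / D x.
  move=> x Dx; have Dx' : b ^+ q * x + 1 != 0 := Dx.
  rewrite /g /D; have -> : b ^+ q * ((x + b) / (b ^+ q * x + 1)) + 1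
      = (b ^+ q * (x + b) + (b ^+ q * x + 1)) / (b ^+ q * x + 1) by field.
  congr (_ / _); have -> : b ^+ q * (x + b) + (b ^+ q * x + 1)
      = (1 + b * b ^+ q) + (b ^+ q * x + b ^+ q * x) by ring.
  by rewrite addxx addr0.
have gg : forall x, D x != 0 -> g (g x) = x.
  move=> x Dx; have -> : g (g x) = (g x + b) / D (g x) by [].
  by rewrite gb // (gD x Dx); move: Dx; move: (D x) => e e0; field; rewrite e0.
have gU : forall x, x \in Ucirc n -> g x \in Ucirc n.
  move=> x xU; have Dx := DU x xU; move: xU; rewrite !inU => /eqP xx.
  rewrite /g -normq expr_div_n !normq.
  have -> : (x + b) * (x + b) ^+ q = D x * D x ^+ q.
    rewrite /D !frob exprMn expqq expr1n; apply/eqP; rewrite -subr_eq0.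
    have -> : (x + b) * (x ^+ q + b ^+ q) - (b ^+ q * x + 1) * (b * x ^+ q + 1)
      = (x * x ^+ q - 1) * (1 - b * b ^+ q) by ring.
    by rewrite xx subrr mul0r.
  by rewrite divff // mulf_neq0 // expf_neq0.
have Dg : forall x, g x \in Ucirc n -> D x != 0.
  move=> x; apply: contraL => /eqP Dx0.
  by rewrite /g Dx0 invr0 mulr0 inE expr0n addn1 /= eq_sym oner_eq0.
have U0 : (0 : F) \notin Ucirc n by rewrite inE expr0n addn1 /= eq_sym oner_eq0.
rewrite /xi (reindex g) /=; last first.
  by exists g => x H; apply: gg; [apply: Dg | apply: DU]; exact: H.
set K0 := a * b ^+ q / (1 + c).
set d := a / (1 + c).
transitivity (\sum_(mu in Ucirc n) sgnF (T (2 * n) K0) * sgnF (T (2 * n) (d * mu^-1))).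
  apply: eq_big => mu.
    apply/idP/idP => [H | /gU //]; rewrite -(gg mu (Dg mu H)); exact: gU H.
  move=> H; have muU : mu \in Ucirc n by rewrite -(gg mu (Dg mu H)); exact: gU H.
  have mu0 : mu != 0 by apply: contraTneq muU => ->.
  have Dm := Dg mu H; rewrite trE gb //.
  have -> : a / (mu * (1 + c) / D mu) = K0 + d * mu^-1.
    rewrite /K0 /d; move: Dm; rewrite /D => Dm; field.
    by rewrite mu0 c1.
  by rewrite T_add sgnF_add ?T2_idem.
rewrite -mulr_sumr.
have E2 : \sum_(mu in Ucirc n) sgnF (T (2 * n) (d * mu^-1))
    = \sum_(mu in Ucirc n) sgnF (T (2 * n) (d * mu)).
  rewrite (reindex_inj invr_inj) /=; apply: eq_big => mu; rewrite ?invrK //.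
  by rewrite !inU exprVn -invfM invr_eq1.
have d0 : d != 0 by rewrite mulf_neq0 // invr_neq0.
rewrite E2 coreT //.
have e : (1 + c) ^+ 2 = 1 + b ^+ 2 * b ^+ q ^+ 2.
  by have := frob 1 1 c; rewrite expn1 expr1n /c exprMn.
have dd : d * d ^+ q = a * a ^+ q / (1 + b ^+ 2 * b ^+ q ^+ 2).
  rewrite /d exprMn exprVn frob expr1n cF -e; field; by rewrite c1.
have tt : T (2 * n) (a ^+ q * b / (1 + c)) = T (2 * n) K0.
  rewrite -T2conj /K0 !exprMn expqq exprVn frob expr1n cF //.
by rewrite dd trE tt mulrC.
Qed.


Lemma partU (a b : F) : a != 0 -> b != 0 -> b \in Ucirc n ->
  (tr n (2 * n) (a * b ^+ q) = 0 ->
     xi n a b = 1 + sgnF (tr 1 n (a * a ^+ q)) * (2 ^ n)%N%:Z) /\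
  (tr n (2 * n) (a * b ^+ q) != 0 -> xi n a b = 1).
Proof.
move=> a0 b0 bU.
have U0 : (0 : F) \notin Ucirc n by rewrite inE expr0n addn1 /= eq_sym oner_eq0.
have bb : b * b ^+ q = 1 by move: bU; rewrite inU => /eqP.
have bq : b ^+ q = b^-1 by rewrite -[b ^+ q]mul1r -(mulVf b0) -mulrA bb mulr1.
set c := a * b ^+ q.
have cc : c * c ^+ q = a * a ^+ q.
  by rewrite /c exprMn expqq -[in RHS](mulr1 (a * a ^+ q)) -bb; ring.
have xi1 : xi n a b = 1 + \sum_(l | (l \in Ucirc n) && (l != b)) sgnF (T (2 * n) (a / (l + b))).
  rewrite /xi (bigD1 b) //= addxx invr0 mulr0 trE T0 {1}/sgnF eqxx; congr (_ + _).
  by apply: eq_bigr => l _; rewrite trE.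
have Wl : forall l, l \in Ucirc n -> l != b ->
    (b / (l + b) + (b / (l + b)) ^+ q = 1) /\ a / (l + b) = c * (b / (l + b)).
  move=> l lU lb.
  have l0 : l != 0 by apply: contraTneq lU => ->.
  have lb0 : l + b != 0 by apply: contra lb; rewrite addr_eq0 oppE.
  have ll : l * l ^+ q = 1 by move: lU; rewrite inU => /eqP.
  have lq : l ^+ q = l^-1 by rewrite -[l ^+ q]mul1r -(mulVf l0) -mulrA ll mulr1.
  split; last by rewrite /c bq; field; rewrite ?b0 ?lb0.
  rewrite exprMn exprVn frob bq lq.
  have -> : l^-1 + b^-1 = (l + b) / (l * b) by field; rewrite ?l0 ?b0.
  by field; rewrite lb0 l0 b0.
split.
  move=> /eqP; rewrite trn addr_eq0 oppE => /eqP cq.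
  rewrite xi1 (eq_bigr (fun _ => sgnF (T n c))); last first.
    move=> l /andP [lU lb]; have [W1 W2] := Wl l lU lb.
    by rewrite W2 T2split exprMn -cq -mulrDr W1 mulr1.
  rewrite (eq_bigl (mem (Ucirc n :\ b))); last by move=> l; rewrite !inE andbC.
  rewrite sumr_const.
  have -> : #|Ucirc n :\ b| = (2 ^ n)%N.
    have := cardsD1 b (Ucirc n); rewrite bU; case: card_Fq_U => _ -> /=.
    by rewrite addn1 add1n => [[]].
  by rewrite trE -cc -cq -expr2 -T_sq sgnF_sq -mulr_natr natz.
rewrite trn => cq0.
rewrite xi1; apply/eqP; rewrite -[X in _ == X]addr0 (inj_eq (addrI 1)); apply/eqP.
rewrite (reindex (fun w => b / w + b)); last first.
  exists (fun l => b / (l + b)) => x; rewrite inE => /andP [xU xb].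
    have x0 : x != 0 by apply: contra xb => /eqP ->; rewrite invr0 mulr0 add0r.
    by rewrite -addrA addxx addr0; field; rewrite ?x0 ?b0.
  have xb0 : x + b != 0 by apply: contra xb; rewrite addr_eq0 oppE.
  have -> : b / (b / (x + b)) = x + b by field; rewrite ?xb0 ?b0.
  by rewrite -addrA addxx addr0.
transitivity (\sum_(w | w + w ^+ q == 1) sgnF (T (2 * n) (c * w))).
  apply: eq_big => w.
    have [-> | w0] := eqVneq w 0.
      by rewrite invr0 mulr0 add0r eqxx andbF frob0 addr0 eq_sym oner_eq0.
    have -> : (b / w + b != b) = true.
      by rewrite -subr_eq0 addrK mulf_eq0 invr_eq0 (negbTE b0) (negbTE w0).
    have u0 : w ^+ q != 0 by rewrite expf_neq0.
    rewrite andbT inU frob exprMn exprVn bq.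
    move: u0; move: (w ^+ q) => u u0.
    have -> : (b / w + b) * (b^-1 / u + b^-1) = (1 + w + u) / (w * u) + 1.
      by field; rewrite ?w0 ?u0 ?b0.
    rewrite -subr_eq0 addrK mulf_eq0 invr_eq0 mulf_eq0 (negbTE w0) (negbTE u0) !orbF.
    by rewrite -addrA addr_eq0 oppE eq_sym.
  move=> /andP [_ wb].
  have w0 : w != 0 by apply: contra wb => /eqP ->; rewrite invr0 mulr0 add0r.
  by rewrite -addrA addxx addr0 /c bq; congr (sgnF (T _ _)); field; rewrite ?w0 ?b0.
have [k1 k1F Tk1] := Tn_nonzero.
have k1q : k1 ^+ q = k1 by move: k1F; rewrite inE => /eqP.
have T1 : T n k1 = 1.
  by case: (idem01 _ (Tn_idem _ k1q)) => // H; rewrite H eqxx in Tk1.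
set e := c + c ^+ q.
have eq : e ^+ q = e by rewrite /e frob expqq addrC.
set k0 := k1 / e.
have k0q : k0 ^+ q = k0 by rewrite /k0 exprMn exprVn eq k1q.
have E : \sum_(w | w + w ^+ q == 1) sgnF (T (2 * n) (c * w))
       = - \sum_(w | w + w ^+ q == 1) sgnF (T (2 * n) (c * w)).
  rewrite {1}(reindex_inj (addrI k0)) /= -sumrN; apply: eq_big => w.
    by rewrite frob k0q addrACA addxx add0r.
  move=> _; rewrite mulrDr T_add sgnF_add ?T2_idem //.
  have -> : T (2 * n) (c * k0) = 1.
    by rewrite T2split exprMn k0q -mulrDl -/e /k0 mulrC divfK.
  by rewrite /sgnF oner_eq0 mulN1r.
move: E; move: (\sum_(w | w + w ^+ q == 1) _) => s; lia.
Qed.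

End S.

Theorem lemma5 (F : finFieldType) (n : nat) (a b : F)
  (hF : #|F| = (2 ^ (2 * n))%N) (ha : a != 0) (hb : b != 0) :
  [/\ (b \in Ucirc n -> tr n (2 * n) (a * conjq n b) = 0 ->
         xi n a b = 1 + sgnF (tr 1 n (a * conjq n a)) * (2 ^ n)%N%:Z),
      (b \in Ucirc n -> tr n (2 * n) (a * conjq n b) != 0 ->
         xi n a b = 1)
    & (b \notin Ucirc n ->
         xi n a b =
           (1 - kloost n (a * conjq n a / (1 + b ^+ 2 * conjq n b ^+ 2)))
           * sgnF (tr 1 (2 * n) (conjq n a * b / (1 + b * conjq n b))))].
Proof.
rewrite /conjq; split => bU.
- by case: (partU _ _ hF _ _ ha hb bU).
- by case: (partU _ _ hF _ _ ha hb bU).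
- exact: (part3 _ _ hF _ _ ha hb bU).
Qed.
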